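(* Let $v,\widetilde v,w\in\mathbb{R}^n$ and let $M\in\mathbb{R}^{n\times n}$ be symmetric. Let $S=\operatorname{supp}(\widetilde v-v)$, $\partial S=\operatorname{supp}(w-\widetilde v)$, $S^{\mathrm{new}}=\operatorname{supp}(w-v)$, $S'=(S\cup\partial S)\setminus S^{\mathrm{new}}$, $\Delta=\widetilde V-V$, $\Delta^{\mathrm{new}}=W-V$, and $$N=\mathcal L_*\big[(\Delta^{\mathrm{new}}_{S^{\mathrm{new}},S^{\mathrm{new}}})^{-1}+M_{S^{\mathrm{new}},S^{\mathrm{new}}}\big]-\mathcal L_*\big[\Delta_{S,S}^{-1}+M_{S,S}\big].$$ Then every nonzero entry of $N$ lies in $(S\setminus\partial S)\times\partial S$, $\partial S\times(S\setminus\partial S)$ or $\partial S\times\partial S$. Moreover: $N_{S\setminus\partial S,\ \partial S\setminus S}=M_{S\setminus\partial S,\ \partial S\setminus S}$; $N_{S\setminus\partial S,\ S'}=-M_{S\setminus\partial S,\ S'}$; and $N_{S\setminus\partial S,\ (S\cap\partial S)\setminus S'}=0$.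
   Context: For $u\in\mathbb{R}^n$, $U=\operatorname{diag}(u)$ (so $V,\widetilde V,W$ are the diagonal matrices of $v,\widetilde v,w$). $\operatorname{supp}(u)=\{i:u_i\ne0\}$. For a matrix $X$ and index sets $I,J$, $X_{I,J}$ is the submatrix with rows $I$ and columns $J$. For $T\subseteq[n]$ and a matrix $K$ with rows and columns indexed by $T$, $\mathcal L_*[K]$ denotes the matrix indexed by $[n]\times[n]$ that equals $K$ on $T\times T$, has entry $1$ on each diagonal position $(i,i)$ with $i\notin T$, and $0$ elsewhere (the same index $i\in[n]$ occupies the same position in every such embedding). Note $\Delta_{S,S}$ and $\Delta^{\mathrm{new}}_{S^{\mathrm{new}},S^{\mathrm{new}}}$ are invertible diagonal matrices. *)

(* Defs.v *)
From HB Require Import structures.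
From mathcomp Require Import all_boot all_order all_algebra.
Set Implicit Arguments. Unset Strict Implicit. Unset Printing Implicit Defensive.
Import Order.TTheory GRing.Theory Num.Theory.
Local Open Scope ring_scope.

Definition supp (R : ringType) (n : nat) (u : 'rV[R]_n) : {set 'I_n} :=
  [set i | u 0 i != 0].

(* X_{T,T}: the submatrix of X with rows and columns in T, indexed by
   'I_#|T| through the increasing enumeration enum_val of T *)
Definition subTT (R : ringType) (n : nat) (T : {set 'I_n}) (X : 'M[R]_n)
  : 'M[R]_#|T| :=
  \matrix_(a, b) X (enum_val a) (enum_val b).

(* L_*[K]: K placed on T x T (via the same enumeration), 1 on the diagonal
   positions (i,i) with i \notin T, 0 elsewhere *)
Definition Lstar (R : ringType) (n : nat) (T : {set 'I_n}) (K : 'M[R]_#|T|)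
  : 'M[R]_n :=
  \sum_(a < #|T|) \sum_(b < #|T|) K a b *: delta_mx (enum_val a) (enum_val b)
  + \sum_(i < n | i \notin T) delta_mx i i.

(* Main.v *)
Require Import Defs.
From mathcomp Require Import all_boot all_order all_algebra.
Import GRing.Theory Num.Theory.
Local Open Scope ring_scope.

Lemma subTT_diag (R : fieldType) n (T : {set 'I_n}) (x : 'rV[R]_n) :
  subTT T (diag_mx x) = diag_mx (\row_a x 0 (enum_val a)).
Proof.
apply/matrixP => a b; rewrite !mxE (inj_eq enum_val_inj).
by case: eqP => // ->.
Qed.

Lemma inv_sub_diag (R : fieldType) n (T : {set 'I_n}) (x : 'rV[R]_n) :
  (forall i, i \in T -> x 0 i != 0) ->
  invmx (subTT T (diag_mx x)) = diag_mx (\row_a (x 0 (enum_val a))^-1).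
Proof.
move=> Hx; rewrite subTT_diag.
set D := diag_mx _; set B := diag_mx _.
have DB : D *m B = 1%:M.
  apply/matrixP => a b; rewrite mul_diag_mx !mxE.
  case: eqP => [->|_]; last by rewrite mulr0.
  by rewrite mulr1n mulfV // Hx // enum_valP.
have [uD _] := mulmx1_unit DB.
by rewrite -[invmx D]mulmx1 -DB mulmxA mulVmx // mul1mx.
Qed.

Lemma addE (R : ringType) n (A B : 'M[R]_n) i j : (A + B) i j = A i j + B i j.
Proof. by rewrite mxE. Qed.
Lemma scaleE (R : ringType) n m (a : R) (A : 'M[R]_(n,m)) i j : (a *: A) i j = a * A i j.
Proof. by rewrite mxE. Qed.

Lemma LstarE_in (R : ringType) n (T : {set 'I_n}) (K : 'M[R]_#|T|) i j
  (Hi : i \in T) (Hj : j \in T) :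
  Lstar K i j = K (enum_rank_in Hi i) (enum_rank_in Hj j).
Proof.
rewrite /Lstar addE [X in _ + X]summxE [X in _ + X]big1 ?addr0; last first.
  move=> k kT; rewrite mxE; case: eqP => //= ik.
  by rewrite ik (negbTE kT) in Hi.
rewrite summxE; under eq_bigr => a _ do rewrite summxE.
rewrite (bigD1 (enum_rank_in Hi i)) //= [X in _ + X]big1 ?addr0; last first.
  move=> a ha; rewrite big1 // => b _; rewrite scaleE !mxE.
  case: eqP => [ia|]; last by rewrite mulr0.
  by move: (enum_valK_in Hi a); rewrite -ia => e; rewrite e eqxx in ha.
rewrite (bigD1 (enum_rank_in Hj j)) //= [X in _ + X]big1 ?addr0; last first.
  move=> b hb; rewrite scaleE !mxE.
  case: eqP => [ia|]; last by rewrite mulr0.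
  case: eqP => [jb|]; last by rewrite mulr0.
  by move: (enum_valK_in Hj b); rewrite -jb => e; rewrite e eqxx in hb.
by rewrite scaleE !mxE !enum_rankK_in // !eqxx mulr1.
Qed.

Lemma LstarE_out (R : ringType) n (T : {set 'I_n}) (K : 'M[R]_#|T|) i j :
  ~~ ((i \in T) && (j \in T)) -> Lstar K i j = (i == j)%:R.
Proof.
move=> H; rewrite /Lstar addE !summxE big1 ?add0r; last first.
  move=> a _; rewrite summxE big1 // => b _; rewrite scaleE !mxE.
  case: eqP => [ia|]; last by rewrite mulr0.
  case: eqP => [jb|]; last by rewrite mulr0.
  by rewrite ia jb !enum_valP in H.
case: (boolP (i \in T)) => iT.
  have jT : j \notin T by move: H; rewrite iT.
  rewrite big1; last by move=> k kT; rewrite mxE; case: eqP => // ik; rewrite -ik iT in kT.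
  by case: eqP => // ij; move: jT; rewrite -ij iT.
rewrite (bigD1 i) //= big1 ?addr0; last first.
  by move=> k /andP[_ ki]; rewrite mxE eq_sym (negbTE ki).
by rewrite mxE eqxx /= eq_sym.
Qed.

Lemma subE (R : ringType) m n (A B : 'M[R]_(m,n)) i j : (A - B) i j = A i j - B i j.
Proof. by rewrite !mxE. Qed.

Lemma AE (R : fieldType) n (x : 'rV[R]_n) (M : 'M[R]_n) i j :
  Lstar (invmx (subTT (supp x) (diag_mx x)) + subTT (supp x) M) i j =
  if (x 0 i != 0) && (x 0 j != 0) then (i == j)%:R * (x 0 i)^-1 + M i j
  else (i == j)%:R.
Proof.
have Hin : forall k, (k \in supp x) = (x 0 k != 0) by move=> k; rewrite inE.
case: ifP => [/andP[Hi Hj]|H]; last first.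
  by rewrite LstarE_out // !Hin H.
rewrite -Hin in Hi; rewrite -Hin in Hj.
rewrite LstarE_in addE inv_sub_diag; last by move=> k; rewrite Hin.
have e : (enum_rank_in Hi i == enum_rank_in Hj j) = (i == j).
  apply/eqP/eqP => [h|ij]; first exact: (enum_rank_in_inj Hi Hj h).
  by move: (eq_enum_rank_in Hi Hj Hi); rewrite {3}ij.
by rewrite !mxE e !enum_rankK_in // mulr_natl.
Qed.

Theorem lemmaA5 (R : realFieldType) (n : nat) (v vt w : 'rV[R]_n)
  (M : 'M[R]_n) (HM : M^T = M) :
  let S := supp (vt - v) in
  let dS := supp (w - vt) in
  let Snew := supp (w - v) in
  let S' := (S :|: dS) :\: Snew in
  let Delta := diag_mx vt - diag_mx v in
  let Deltanew := diag_mx w - diag_mx v in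
  let N := Lstar (invmx (subTT Snew Deltanew) + subTT Snew M)
           - Lstar (invmx (subTT S Delta) + subTT S M) in
  (forall i j, N i j != 0 ->
      (i \in S :\: dS) && (j \in dS)
   || (i \in dS) && (j \in S :\: dS)
   || (i \in dS) && (j \in dS))
  /\ (forall i j, i \in S :\: dS -> j \in dS :\: S -> N i j = M i j)
  /\ (forall i j, i \in S :\: dS -> j \in S' -> N i j = - M i j)
  /\ (forall i j, i \in S :\: dS -> j \in (S :&: dS) :\: S' -> N i j = 0).
Proof.
move=> S dS Snew S' Delta Deltanew N.
have dB : forall a b : 'rV[R]_n, diag_mx a - diag_mx b = diag_mx (a - b).
  move=> a b; apply/matrixP => k l; rewrite !mxE.
  by case: eqP => _; rewrite ?mulr1n ?mulr0n ?subr0.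
have key : forall k, (w - v) 0 k = (vt - v) 0 k + (w - vt) 0 k.
  by move=> k; rewrite !subE addrC addrA subrK.
have NE : forall i j, N i j =
   (if ((w - v) 0 i != 0) && ((w - v) 0 j != 0)
    then (i == j)%:R * ((w - v) 0 i)^-1 + M i j else (i == j)%:R)
 - (if ((vt - v) 0 i != 0) && ((vt - v) 0 j != 0)
    then (i == j)%:R * ((vt - v) 0 i)^-1 + M i j else (i == j)%:R).
  by move=> i j; rewrite /N subE /Deltanew /Delta !dB !AE.
have Hin : forall (x : 'rV[R]_n) k, (k \in supp x) = (x 0 k != 0)
  by move=> x k; rewrite inE.
rewrite /S' /S /dS /Snew; split; [|split; [|split]] => i j; rewrite NE ?inE ?Hin !key;
case: (i =P j) => [<-|/eqP ne]; rewrite ?eqxx ?(negbTE ne);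
  move: ((vt - v) 0 i) ((w - vt) 0 i) ((vt - v) 0 j) ((w - vt) 0 j) (M i j) => a b c d m;
  case: (eqVneq a 0) => [->|ha]; case: (eqVneq b 0) => [->|hb]; 
  rewrite ?addr0 ?add0r ?eqxx ?ha ?hb /=.
all: try (case: (eqVneq c 0) => [->|hc]; case: (eqVneq d 0) => [->|hd]; 
  rewrite ?addr0 ?add0r ?eqxx ?hc ?hd /=).
all: try (case: (eqVneq (a + b) 0) => [->|hab]; rewrite ?eqxx ?hab /=).
all: try (case: (eqVneq (c + d) 0) => [->|hcd]; rewrite ?eqxx ?hcd /=).
all: rewrite ?mul0r ?mulr0 ?add0r ?subrr ?subr0 ?sub0r ?oppr0 ?eqxx //.
all: try (case: (eqVneq (c + d) 0) => [->|hcd]; rewrite ?eqxx ?hcd /=).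
all: rewrite ?mul0r ?mulr0 ?add0r ?subrr ?subr0 ?sub0r ?oppr0 ?eqxx //.
all: case: ifP => hcd; rewrite ?hcd //= ?sub0r ?subrr //.
Qed.
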